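(* Let $P$ be an $n\times n$ complex matrix and let $S_P: M_n\to M_n$ be the Schur product map $S_P(B)=P\circ B$. Then $S_P$ is PPT if and only if $P\ge 0$ and $P$ is diagonal.
   Context: For $A=(a_{i,j}),B=(b_{i,j})$ of the same size, the Schur product is $A\circ B=(a_{i,j}b_{i,j})$. A linear map is completely positive (CP) if $\phi\otimes \mathrm{id}_k$ is positive for all $k$. A CP map $\phi: M_n\to M_n$ is PPT if $T\circ\phi$ is CP, where $T$ is the transpose map on $M_n$. *)

(* Defs.v *)
From HB Require Import structures.
From mathcomp Require Import all_boot all_order all_algebra.
Set Implicit Arguments. Unset Strict Implicit. Unset Printing Implicit Defensive.
Import Order.TTheory GRing.Theory Num.Theory.
Local Open Scope ring_scope.

(* C : numClosedFieldType plays the role of the complex numbers (with its conjugation Num.conj). *)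

Definition adjmx {C : numClosedFieldType} {m n : nat} (A : 'M[C]_(m, n)) : 'M[C]_(n, m) :=
  (map_mx Num.conj A)^T.

(* Positive semidefinite: v^* A v >= 0 (real, nonnegative) for every vector v. *)
Definition psd {C : numClosedFieldType} {m : nat} (A : 'M[C]_m) : Prop :=
  forall v : 'cV[C]_m, 0 <= (adjmx v *m A *m v) 0 0.

Definition positive_map {C : numClosedFieldType} {n : nat} (phi : 'M[C]_n -> 'M[C]_n) : Prop :=
  forall A : 'M[C]_n, psd A -> psd (phi A).

(* The k-th amplification of phi acting on M_k(M_n), viewed as block matrices
   in 'M_(\sum_(i<k) n): it applies phi blockwise. *)
Definition ampl {C : numClosedFieldType} {n : nat} (k : nat)
  (phi : 'M[C]_n -> 'M[C]_n) (X : 'I_k -> 'I_k -> 'M[C]_n)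
  : 'M[C]_(\sum_(i < k) n)%N :=
  \mxblock_(i < k, j < k) phi (X i j).

Definition blockmx_of {C : numClosedFieldType} {n : nat} (k : nat)
  (X : 'I_k -> 'I_k -> 'M[C]_n) : 'M[C]_(\sum_(i < k) n)%N :=
  \mxblock_(i < k, j < k) X i j.

(* Completely positive: phi (x) id_k is positive for every k. *)
Definition completely_positive {C : numClosedFieldType} {n : nat}
  (phi : 'M[C]_n -> 'M[C]_n) : Prop :=
  forall (k : nat) (X : 'I_k -> 'I_k -> 'M[C]_n),
    psd (blockmx_of X) -> psd (ampl phi X).

Definition transpose_map {C : numClosedFieldType} {n : nat} (A : 'M[C]_n) : 'M[C]_n := A^T.

Definition PPT {C : numClosedFieldType} {n : nat} (phi : 'M[C]_n -> 'M[C]_n) : Prop :=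
  completely_positive phi /\ completely_positive (fun B => transpose_map (phi B)).

Definition schur {C : numClosedFieldType} {m n : nat} (A B : 'M[C]_(m, n)) : 'M[C]_(m, n) :=
  \matrix_(i, j) (A i j * B i j).

Definition schur_map {C : numClosedFieldType} {n : nat} (P : 'M[C]_n) : 'M[C]_n -> 'M[C]_n :=
  fun B => schur P B.

(* Main.v *)
Require Import Defs.
From HB Require Import structures.
From mathcomp Require Import all_boot all_order all_algebra.
From mathcomp Require Import ring.
Set Implicit Arguments. Unset Strict Implicit. Unset Printing Implicit Defensive.
Import Order.TTheory GRing.Theory Num.Theory.
Local Open Scope ring_scope.

Section S.
Variable C : numClosedFieldType.

Lemma quadE m (u v : 'cV[C]_m) (A : 'M[C]_m) :
  (adjmx u *m A *m v) 0 0 = \sum_r \sum_s (u r 0)^* * A r s * v s 0.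
Proof.
rewrite mxE. rewrite exchange_big; apply: eq_bigr => s _; rewrite mxE mulr_suml; apply: eq_bigr => r _.
by rewrite !mxE.
Qed.

Lemma adjmx_mxcol k n (w : 'I_k -> 'cV[C]_n) :
  adjmx (\mxcol_a w a) = \mxrow_a adjmx (w a).
Proof. by apply/matrixP => r s; rewrite !mxE. Qed.

Lemma quad_block k n (w : 'I_k -> 'cV[C]_n) (B : 'I_k -> 'I_k -> 'M[C]_n) :
  (adjmx (\mxcol_a w a) *m (\mxblock_(a < k, b < k) B a b) *m \mxcol_b w b) 0 0
  = \sum_a \sum_b (adjmx (w a) *m B a b *m w b) 0 0.
Proof.
rewrite adjmx_mxcol mul_mxrow_mxblock mul_mxrow_mxcol summxE [RHS]exchange_big /=.
by apply: eq_bigr => b _; rewrite mulmx_suml summxE.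
Qed.

Lemma psd_blockP k n (B : 'I_k -> 'I_k -> 'M[C]_n) :
  psd (\mxblock_(a < k, b < k) B a b) <->
  forall w : 'I_k -> 'cV[C]_n, 0 <= \sum_a \sum_b (adjmx (w a) *m B a b *m w b) 0 0.
Proof.
split=> [H w|H v]; first by rewrite -quad_block; exact: H.
by rewrite -[v]submxcolK quad_block; exact: H.
Qed.

Lemma adj_swap m (u v : 'cV[C]_m) : (adjmx u *m v) 0 0 = ((adjmx v *m u) 0 0)^*.
Proof.
rewrite !mxE rmorph_sum; apply: eq_bigr => i _.
by rewrite !mxE rmorphM mulrC; congr (_ * _); exact/esym/conjCK.
Qed.

Lemma mx11_mul m (M : 'M[C]_(1, m)) (N : 'M[C]_(m, 1)) (A : 'M[C]_m) :
  True.
Proof. by []. Qed.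

Lemma psd_rank1 k n (y : 'I_k -> 'cV[C]_n) :
  psd (\mxblock_(a < k, b < k) (y a *m adjmx (y b))).
Proof.
apply/psd_blockP => w.
pose s := fun a => ((adjmx (w a) *m y a) 0 0 : C).
have -> : \sum_a \sum_b (adjmx (w a) *m (y a *m adjmx (y b)) *m w b) 0 0
   = (\sum_a s a) * (\sum_b s b)^*.
  rewrite mulr_suml; apply: eq_bigr => a _.
  rewrite rmorph_sum mulr_sumr; apply: eq_bigr => b _.
  rewrite mulmxA -mulmxA [in LHS]mxE big_ord1 (adj_swap (y b)).
  by [].
exact: (mul_conjC_ge0 (\sum_a s a)).
Qed.

Lemma sum_single n (F : 'I_n -> C) r :
  (forall s, s != r -> F s = 0) -> \sum_s F s = F r.
Proof.
move=> H; rewrite (bigD1 r) //= big1 ?addr0 // => s /H.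
Qed.

Lemma sum_diag n (F : 'I_n -> 'I_n -> C) :
  (forall r s, r != s -> F r s = 0) -> \sum_r \sum_s F r s = \sum_r F r r.
Proof.
move=> H; apply: eq_bigr => r _; apply: sum_single => s rs.
by apply: H; rewrite eq_sym.
Qed.

Lemma diag_ge0 n (P : 'M[C]_n) i : psd P -> 0 <= P i i.
Proof.
move=> /(_ (delta_mx i 0)); rewrite quadE.
rewrite (sum_single (r:=i)); last first.
  move=> r ri; apply: big1 => s _; rewrite !mxE (negbTE ri) /=.
  by rewrite rmorph0 !mul0r.
rewrite (sum_single (r:=i)); last first.
  by move=> s si; rewrite !mxE (negbTE si) /= mulr0.
by rewrite !mxE eqxx /= rmorph1 mul1r mulr1.
Qed.

Lemma cp_diag n (P : 'M[C]_n) (phi : 'M[C]_n -> 'M[C]_n) :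
  psd P -> is_diag_mx P -> (forall B, phi B = schur P B) ->
  completely_positive phi.
Proof.
move=> Ppsd /is_diag_mxP Pd Hphi k X HX.
rewrite /ampl (eq_mxblock (B_ := fun a b => schur P (X a b))); last first.
  by move=> a b; rewrite Hphi.
move/psd_blockP: HX => HX.
apply/psd_blockP => w.
pose u (r : 'I_n) (a : 'I_k) : 'cV[C]_n := \col_r' (if r' == r then w a r 0 else 0).
have Q0 : forall r, 0 <= \sum_a \sum_b (adjmx (u r a) *m X a b *m u r b) 0 0.
  by move=> r; apply: HX.
have -> : \sum_a \sum_b (adjmx (w a) *m schur P (X a b) *m w b) 0 0 =
   \sum_r P r r * \sum_a \sum_b (adjmx (u r a) *m X a b *m u r b) 0 0.
  transitivity (\sum_a \sum_b \sum_r ((w a r 0)^* * (P r r * X a b r r) * w b r 0)).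
    apply: eq_bigr => a _; apply: eq_bigr => b _; rewrite quadE.
    rewrite (sum_diag (F := fun r s => (w a r 0)^* * schur P (X a b) r s * w b s 0)).
      by apply: eq_bigr => r _; rewrite !mxE.
    by move=> r s rs; rewrite !mxE Pd ?mul0r ?mulr0 ?mul0r //.
  rewrite [RHS](eq_bigr (fun r => \sum_a \sum_b P r r * (adjmx (u r a) *m X a b *m u r b) 0 0)); last first.
    by move=> r _; rewrite mulr_sumr; apply: eq_bigr => a _; rewrite mulr_sumr.
  rewrite [RHS]exchange_big; apply: eq_bigr => a _.
  rewrite [RHS]exchange_big; apply: eq_bigr => b _; apply: eq_bigr => r _.
  rewrite quadE (sum_single (r:=r)); last first.
    move=> s sr; apply: big1 => t _; rewrite !mxE (negbTE sr).
    by rewrite rmorph0 !mul0r.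
  rewrite (sum_single (r:=r)); last first.
    by move=> t tr; rewrite !mxE (negbTE tr) mulr0.
  rewrite !mxE !eqxx.
  by ring.
apply: sumr_ge0 => r _; apply: mulr_ge0 => //; exact: diag_ge0.
Qed.

Lemma quad_delta n (P : 'M[C]_n) (u v : 'cV[C]_n) (p q : 'I_n) :
  (adjmx u *m (schur P ((delta_mx p (0 : 'I_1) : 'cV[C]_n) *m adjmx (delta_mx q (0 : 'I_1) : 'cV[C]_n)))^T *m v) 0 0
  = (u q 0)^* * P p q * v p 0.
Proof.
rewrite quadE (sum_single (r:=q)); last first.
  move=> r rq; apply: big1 => s _; rewrite !mxE big_ord1 !mxE (negbTE rq) /=.
  by rewrite rmorph0 !mulr0 mul0r.
rewrite (sum_single (r:=p)); last first.
  by move=> s sp; rewrite !mxE big_ord1 !mxE (negbTE sp) /= mulr0n !(mul0r, mulr0).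
by rewrite !mxE big_ord1 !mxE !eqxx /= mulr1n rmorph1 !mulr1.
Qed.

Lemma offdiag n (P : 'M[C]_n) :
  completely_positive (fun B => transpose_map (schur_map P B)) ->
  forall i j : 'I_n, i != j -> P i j = 0.
Proof.
move=> H i j ij.
pose f (a : 'I_2%N) := if a == 0 then i else j.
pose e (r : 'I_n) : 'cV[C]_n := delta_mx r 0.
have key : forall y : C, 0 <= P i j * y + y^* * P j i.
  move=> y.
  have := H 2%N (fun a b => e (f a) *m adjmx (e (f b))) (psd_rank1 (fun a => e (f a))).
  rewrite /ampl => /psd_blockP/(_ (fun a => if a == 0 then e j else y *: e i)).
  rewrite /transpose_map /schur_map.
  rewrite !big_ord_recl !big_ord0 /= !quad_delta.
  have ji : j != i by rewrite eq_sym.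
  rewrite /f /e /= !mxE eqxx (negbTE ij) (negbTE ji) /= !eqxx /= !mulr1n.
  by rewrite rmorph0 rmorph1 !(mul0r, mulr0, mul1r, mulr1, add0r, addr0).
have k1 := key 1; have k2 := key (-1); have k3 := key 'i; have k4 := key (- 'i).
move: k1 k2 k3 k4; set a := P i j; set b := P j i.
have ci' : (- 'i : C)^* = 'i by rewrite -conjCi conjCK.
rewrite ci' rmorph1 rmorphN1 conjCi mulr1 mul1r mulrN1 mulN1r => k1 k2 k3 k4.
have hab : b = - a.
  apply/eqP; rewrite -addr_eq0 addrC; apply/eqP/le_anti/andP; split => //.
  by rewrite -oppr_ge0 opprD.
move: k3 k4; rewrite hab.
have -> : a * 'i + - 'i * - a = a * 'i *+ 2 by ring.
have -> : a * - 'i + 'i * - a = - (a * 'i *+ 2) by ring.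
rewrite oppr_ge0 => k3 k4.
have /eqP : a * 'i *+ 2 = 0 by apply/le_anti/andP; split.
rewrite mulrn_eq0 /= mulf_eq0 (negbTE (neq0Ci C)) orbF.
by move/eqP.
Qed.

Lemma psd_of_cp n (P : 'M[C]_n) : completely_positive (schur_map P) -> psd P.
Proof.
move=> H v.
pose y : 'cV[C]_n := const_mx 1.
have := H 1%N (fun _ _ => y *m adjmx y) (psd_rank1 (fun _ => y)).
rewrite /ampl => /psd_blockP/(_ (fun _ => v)).
rewrite !big_ord1.
have -> : schur_map P (y *m adjmx y) = P.
  apply/matrixP => r s; rewrite !mxE big_ord1 !mxE rmorph1 mulr1.
  by rewrite mulr1.
done.
Qed.
End S.

Theorem mainTheorem8 (C : numClosedFieldType) (n : nat) (P : 'M[C]_n) :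
  PPT (schur_map P) <-> psd P /\ is_diag_mx P.
Proof.
split.
  case=> H1 H2; split; first exact: psd_of_cp.
  by apply/is_diag_mxP => i j ij; apply: (offdiag H2).
case=> Pp Pd; split; apply: (cp_diag Pp Pd) => // B.
apply/matrixP => r s; rewrite !mxE.
have [->|rs] := eqVneq r s; first done.
rewrite !(is_diag_mxP Pd) ?mul0r //; first by rewrite eq_sym.
Qed.
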